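(* Consider the multi-subflow routing problem described in the context. Assume $e_{ij}^k(\mathbf{y})>0$ for all $(i,j)\in\mathcal{A}$, all $k$ and all $\mathbf{y}\in\{0,1\}^N$, that at least one directed path from $1$ to $n$ exists, and that every subflow must recharge: for every routing $x$ in which each $x^k$ is the indicator of a simple directed $1$–$n$ path $P^k$, and every $k$, $\sum_{(i,j)\in P^k} e_{ij}^k(\mathbf{x}_{ij})>E_1^k$. Consider the routing-only problem $$\text{(R)}\quad\min_{x}\ \sum_{(i,j)\in\mathcal{A}}\sum_{k=1}^N\Bigl(\tau_{ij}^k(\mathbf{x}_{ij})+g\,e_{ij}^k(\mathbf{x}_{ij})\,x_{ij}^k\Bigr)$$ over all $x=(x_{ij}^k)$ such that, for each $k$, the arcs with $x_{ij}^k=1$ form a simple directed path from $1$ to $n$. Then the multi-subflow routing problem has an optimal solution, its optimal value equals $(\text{optimal value of (R)})-g\sum_{k=1}^N E_1^k$, and for every optimal solution $(x^*,r^*,E^* )$ of the multi-subflow routing problem, $x^*$ is an optimal solution of (R).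
   Context: Let $G=(\mathcal{N},\mathcal{A})$ be a directed graph with $\mathcal{N}=\{1,\dots,n\}$, $n\ge2$, $I(i)=\{j:(j,i)\in\mathcal{A}\}$, $O(i)=\{j:(i,j)\in\mathcal{A}\}$, with $I(1)=\emptyset$ and $O(n)=\emptyset$ (origin $1$, destination $n$). There are $N\ge1$ vehicle subflows $k=1,\dots,N$. Decision variables: $x_{ij}^k\in\{0,1\}$ for $(i,j)\in\mathcal{A}$ and each $k$, recharging amounts $r_i^k\ge0$ for $i\in\mathcal{N}$ and each $k$, and residual energies $E_j^k$, $j=2,\dots,n$. Write $\mathbf{x}_{ij}=(x_{ij}^1,\dots,x_{ij}^N)\in\{0,1\}^N$. For each arc and each $k$ there are given real-valued functions $\tau_{ij}^k(\mathbf{x}_{ij})$ (travel time of subflow $k$ on arc $(i,j)$, depending on congestion) and $e_{ij}^k(\mathbf{x}_{ij})$ (energy consumption of subflow $k$ on arc $(i,j)$). Given constants: initial energies $E_1^k\ge0$ and $g>0$ (charging time per unit energy). A triple $(x,r,E)$ is feasible if for every $k$: (a) the arcs with $x_{ij}^k=1$ form a simple directed path from $1$ to $n$; (b) $E_j^k=\sum_{i\in I(j)}\bigl(E_i^k+r_i^k-e_{ij}^k(\mathbf{x}_{ij})\bigr)x_{ij}^k$ for $j=2,\dots,n$; (c) $E_i^k\ge0$ for all $i$. The objective to be minimized is $J(x,r)=\sum_{(i,j)\in\mathcal{A}}\sum_{k=1}^N\bigl(\tau_{ij}^k(\mathbf{x}_{ij})+g\,r_i^k x_{ij}^k\bigr)$.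 An optimal solution is a feasible solution minimizing $J$. *)

(* Defs.v *)
From HB Require Import structures.
From mathcomp Require Import all_boot all_order all_algebra.
Set Implicit Arguments. Unset Strict Implicit. Unset Printing Implicit Defensive.
Import Order.TTheory GRing.Theory Num.Theory.
Local Open Scope ring_scope.

(* Nodes are 'I_n; arcs are given by a relation A : rel 'I_n ((i,j) is an arc
   iff A i j).  A routing x assigns to each ordered pair
   (i,j) the vector x_ij = (x_ij^1,...,x_ij^N) in {0,1}^N (only arcs matter). *)

Definition routing (n N : nat) := 'I_n -> 'I_n -> {ffun 'I_N -> bool}.

Definition simple_path_arcs (n : nat) (A : rel 'I_n) (S : 'I_n -> 'I_n -> bool)
    (s t : 'I_n) : Prop :=
  exists p : seq 'I_n,
    [/\ path A s p, last s p = t, uniq (s :: p) &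
        forall i j, A i j -> S i j = ((i, j) \in zip (s :: p) p)].

Definition valid_routing (n N : nat) (A : rel 'I_n) (s t : 'I_n)
    (x : routing n N) : Prop :=
  forall k : 'I_N, simple_path_arcs A (fun i j => x i j k) s t.

(* residual energy, with the given initial energy E1 at the origin s;
   the decision variables E are those at nodes j <> s *)
Definition Eext (R : realFieldType) (n N : nat) (s : 'I_n) (E1 : 'I_N -> R)
    (E : 'I_n -> 'I_N -> R) (i : 'I_n) (k : 'I_N) : R :=
  if i == s then E1 k else E i k.

Definition feasible (R : realFieldType) (n N : nat) (A : rel 'I_n) (s t : 'I_n)
    (e : 'I_n -> 'I_n -> 'I_N -> {ffun 'I_N -> bool} -> R) (E1 : 'I_N -> R)
    (x : routing n N) (r : 'I_n -> 'I_N -> R) (E : 'I_n -> 'I_N -> R) : Prop :=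
  [/\ valid_routing A s t x,
      (forall i k, 0 <= r i k),
      (forall j k, j != s ->
         E j k = \sum_(i : 'I_n | A i j)
                   (Eext s E1 E i k + r i k - e i j k (x i j)) * (x i j k)%:R) &
      (forall i k, 0 <= Eext s E1 E i k)].

Definition Jobj (R : realFieldType) (n N : nat) (A : rel 'I_n)
    (tau : 'I_n -> 'I_n -> 'I_N -> {ffun 'I_N -> bool} -> R) (g : R)
    (x : routing n N) (r : 'I_n -> 'I_N -> R) : R :=
  \sum_(i : 'I_n) \sum_(j : 'I_n | A i j) \sum_(k : 'I_N)
     (tau i j k (x i j) + g * r i k * (x i j k)%:R).

Definition JRobj (R : realFieldType) (n N : nat) (A : rel 'I_n)
    (tau e : 'I_n -> 'I_n -> 'I_N -> {ffun 'I_N -> bool} -> R) (g : R)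
    (x : routing n N) : R :=
  \sum_(i : 'I_n) \sum_(j : 'I_n | A i j) \sum_(k : 'I_N)
     (tau i j k (x i j) + g * e i j k (x i j) * (x i j k)%:R).

Definition optimal_MSR (R : realFieldType) (n N : nat) (A : rel 'I_n) (s t : 'I_n)
    (tau e : 'I_n -> 'I_n -> 'I_N -> {ffun 'I_N -> bool} -> R) (g : R)
    (E1 : 'I_N -> R) (x : routing n N) (r : 'I_n -> 'I_N -> R)
    (E : 'I_n -> 'I_N -> R) : Prop :=
  feasible A s t e E1 x r E /\
  forall x' r' E', feasible A s t e E1 x' r' E' -> Jobj A tau g x r <= Jobj A tau g x' r'.

Definition optimal_R (R : realFieldType) (n N : nat) (A : rel 'I_n) (s t : 'I_n)
    (tau e : 'I_n -> 'I_n -> 'I_N -> {ffun 'I_N -> bool} -> R) (g : R)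
    (x : routing n N) : Prop :=
  valid_routing A s t x /\
  forall x', valid_routing A s t x' -> JRobj A tau e g x <= JRobj A tau e g x'.

(* Main.v *)
Require Import Defs.
From HB Require Import structures.
From mathcomp Require Import all_boot all_order all_algebra.
From mathcomp Require Import ring.
From Stdlib Require Import Classical FunctionalExtensionality.
Import Order.TTheory GRing.Theory Num.Theory.
Local Open Scope ring_scope.
Set Implicit Arguments. Unset Strict Implicit.

Lemma zip_mem_A (T : eqType) (A : rel T) a l u :
  path A a l -> u \in zip (a::l) l -> A u.1 u.2.
Proof.
elim: l a => [|b l IH] a //=.
case/andP=> Hab Hp; rewrite in_cons; case/orP=> [/eqP -> //|]; exact: IH.
Qed.

Lemma zip_mem2 (T : eqType) (a : T) l u : u \in zip (a::l) l -> (u.1 \in a::l) /\ (u.2 \in l).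
Proof.
elim: l a => [|b l IH] a //=.
rewrite in_cons; case/orP=> [/eqP -> /=|/IH [H1 H2]].
  by split; rewrite !in_cons eqxx ?orbT.
by rewrite H1 orbT; split => //; rewrite in_cons H2 orbT. Qed.


Lemma zip_uniq (T : eqType) (a : T) l : uniq (a::l) -> uniq (zip (a::l) l).
Proof.
elim: l a => [|b l IH] a //=.
rewrite in_cons negb_or => /andP[/andP[Hab Hal] Hu].
rewrite IH ?Hu // andbT; apply/negP=> /zip_mem2 [/= H _].
by move: H; rewrite in_cons (negbTE Hal) orbF (negbTE Hab). Qed.

Lemma zip_pred_uniq (T : eqType) (a : T) l i i' j : uniq (a::l) ->
  (i,j) \in zip (a::l) l -> (i',j) \in zip (a::l) l -> i = i'.
Proof.
elim: l a => [|b l IH] a //=.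
rewrite in_cons => /andP[_ /andP[Hbl Hu]].
move=> /orP[/eqP [Hi Hj]|H1] /orP[/eqP [Hi' Hj']|H2].
- by rewrite Hi Hi'.
- by move: (zip_mem2 H2) => [_ /= H]; rewrite -Hj H in Hbl.
- by move: (zip_mem2 H1) => [_ /= H]; move: Hbl; rewrite -Hj' H.
- by apply: (IH b) => //=; rewrite Hbl Hu.
Qed.

Lemma zip_pred_ex (T : eqType) (a : T) l j : j \in l -> exists i, (i,j) \in zip (a::l) l.
Proof.
elim: l a => [|b l IH] a //=.
rewrite in_cons => /orP[/eqP ->|/(IH b) [i Hi]].
  by exists a; rewrite in_cons eqxx.
by exists i; rewrite in_cons Hi orbT.
Qed.

Lemma zip_tele (R : realFieldType) (T : eqType) (F : T -> R) a l :
  \sum_(u <- zip (a::l) l) (F u.2 - F u.1) = F (last a l) - F a.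
Proof.
elim: l a => [|b l IH] a /=; first by rewrite big_nil subrr.
rewrite big_cons IH /=; ring.
Qed.

Lemma sum_arcs (R : realFieldType) (n : nat) (A : rel 'I_n) (F : 'I_n -> 'I_n -> R)
  (z : seq ('I_n * 'I_n)) (y : 'I_n -> 'I_n -> bool) :
  uniq z -> (forall u, u \in z -> A u.1 u.2) ->
  (forall i j, A i j -> y i j = ((i,j) \in z)) ->
  \sum_i \sum_(j | A i j) F i j * (y i j)%:R = \sum_(u <- z) F u.1 u.2.
Proof.
move=> Hu HA Hy.
rewrite (pair_big_dep xpredT (fun i j => A i j) (fun i j => F i j * (y i j)%:R)) /=.
rewrite (big_uniq _ Hu) /= big_mkcond [RHS]big_mkcond /=.
apply: eq_bigr => [[i j]] _ /=.
case Hij: (A i j) => /=.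
  by rewrite Hy //; case: ((i,j) \in z); rewrite ?mulr1 ?mulr0.
case Hz: ((i,j) \in z) => //.
by move: (HA _ Hz); rewrite /= Hij.
Qed.

Lemma sum_in (R : realFieldType) (n : nat) (A : rel 'I_n) (G : 'I_n -> R)
  (z : seq ('I_n * 'I_n)) (y : 'I_n -> 'I_n -> bool) i j :
  A i j -> (i,j) \in z -> (forall i', (i',j) \in z -> i' = i) ->
  (forall i j, A i j -> y i j = ((i,j) \in z)) ->
  \sum_(i' | A i' j) G i' * (y i' j)%:R = G i.
Proof.
move=> HA Hz Hun Hy.
rewrite (bigD1 i) //= Hy // Hz mulr1 big1 ?addr0 // => i' /andP[Hi' Hne].
rewrite Hy //; case Hz': ((i',j) \in z); last by rewrite mulr0.
by rewrite (Hun _ Hz') eqxx in Hne.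
Qed.

Fixpoint remE (R : realFieldType) (T : eqType) (w : T -> T -> R) (a : T) (l : seq T) : R :=
  if l is b::l' then w a b + remE w b l' else 0.

Fixpoint Eat (R : realFieldType) (T : eqType) (w : T -> T -> R) (a : T) (l : seq T) (v : T) : R :=
  if v == a then remE w a l else if l is b::l' then Eat w b l' v else 0.

Lemma remE_sum (R : realFieldType) (T : eqType) (w : T -> T -> R) a l :
  remE w a l = \sum_(u <- zip (a::l) l) w u.1 u.2.
Proof. by elim: l a => [|b l IH] a /=; rewrite ?big_nil // big_cons IH. Qed.

Lemma Eat_a (R : realFieldType) (T : eqType) (w : T -> T -> R) a l : Eat w a l a = remE w a l.
Proof. by case: l => [|b l] /=; rewrite eqxx. Qed.

Lemma Eat_step (R : realFieldType) (T : eqType) (w : T -> T -> R) a l i j :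
  uniq (a::l) -> (i,j) \in zip (a::l) l -> Eat w a l i = w i j + Eat w a l j.
Proof.
elim: l a => [|b l IH] a //=.
rewrite in_cons negb_or => /andP[/andP[Hab Hal] Hu].
rewrite in_cons => /orP[/eqP [-> ->]|H].
  rewrite eqxx eq_sym (negbTE Hab) Eat_a //.
move: (zip_mem2 H) => [/= H1 H2].
have Hia : (i == a) = false.
  by apply/negP => /eqP E; move: Hab Hal H1; rewrite -E in_cons => /negbTE -> /negbTE ->.
have Hja : (j == a) = false.
  by apply/negP => /eqP E; move: Hal H2; rewrite -E => /negbTE ->.
rewrite Hia Hja; exact: IH.
Qed.

Lemma Eat_out (R : realFieldType) (T : eqType) (w : T -> T -> R) a l v :
  v \notin a::l -> Eat w a l v = 0.
Proof.
elim: l a => [|b l IH] a /=; rewrite in_cons negb_or => /andP[/negbTE -> H] //.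
exact: IH.
Qed.

Lemma Eat_last (R : realFieldType) (T : eqType) (w : T -> T -> R) a l :
  uniq (a::l) -> Eat w a l (last a l) = 0.
Proof.
elim: l a => [|b l IH] a /=; first by rewrite eqxx.
rewrite in_cons negb_or => /andP[/andP[Hab Hal] Hu].
have : last b l \in b :: l by exact: mem_last.
case: eqP => [->|_ _]; first by rewrite in_cons (negbTE Hab) (negbTE Hal).
exact: IH.
Qed.

Lemma remE_ge0 (R : realFieldType) (T : eqType) (A : rel T) (w : T -> T -> R) a l :
  path A a l -> (forall i j, A i j -> 0 <= w i j) -> 0 <= remE w a l.
Proof.
move=> + Hw; elim: l a => [|b l IH] a //= /andP[Hab Hp].
by rewrite addr_ge0 ?Hw ?IH.
Qed.

Lemma Eat_ge0 (R : realFieldType) (T : eqType) (A : rel T) (w : T -> T -> R) a l v :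
  path A a l -> (forall i j, A i j -> 0 <= w i j) -> 0 <= Eat w a l v.
Proof.
move=> + Hw; elim: l a => [|b l IH] a /=.
  by case: (v == a).
move=> /andP[Hab Hp]; case: (v == a); last exact: IH.
by rewrite addr_ge0 ?Hw // (remE_ge0 Hp Hw).
Qed.

Lemma gen_split (R : realFieldType) (n N : nat) (A : rel 'I_n)
  (a w : 'I_n -> 'I_n -> 'I_N -> R) (y : 'I_n -> 'I_n -> 'I_N -> bool) (g : R) :
  \sum_(i : 'I_n) \sum_(j : 'I_n | A i j) \sum_(k : 'I_N) (a i j k + g * w i j k * (y i j k)%:R)
  = \sum_(i : 'I_n) \sum_(j : 'I_n | A i j) \sum_(k : 'I_N) a i j k
    + g * \sum_(k : 'I_N) \sum_(i : 'I_n) \sum_(j : 'I_n | A i j) w i j k * (y i j k)%:R.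
Proof.
have -> : \sum_(k : 'I_N) \sum_(i : 'I_n) \sum_(j : 'I_n | A i j) w i j k * (y i j k)%:R
   = \sum_(i : 'I_n) \sum_(j : 'I_n | A i j) \sum_(k : 'I_N) w i j k * (y i j k)%:R.
  rewrite exchange_big /=; apply: eq_bigr => i _; by rewrite exchange_big.
rewrite mulr_sumr -big_split /=; apply: eq_bigr => i _.
rewrite mulr_sumr -big_split /=; apply: eq_bigr => j _.
rewrite mulr_sumr -big_split /=; apply: eq_bigr => k _; by rewrite mulrA.
Qed.

Lemma per_k (R : realFieldType) (n N : nat) (A : rel 'I_n) (s t : 'I_n)
  (e : 'I_n -> 'I_n -> 'I_N -> {ffun 'I_N -> bool} -> R) (E1 : 'I_N -> R)
  (x : routing n N) r E (k : 'I_N) :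
  feasible A s t e E1 x r E ->
  \sum_i \sum_(j | A i j) r i k * (x i j k)%:R =
  Eext s E1 E t k - E1 k + \sum_i \sum_(j | A i j) e i j k (x i j) * (x i j k)%:R.
Proof.
case=> Hv Hr HE HF.
have [p [Hp Hl Hu Hx]] := Hv k.
have Hzu := zip_uniq Hu.
have HzA : forall u, u \in zip (s::p) p -> A u.1 u.2 := fun u => zip_mem_A Hp.
rewrite (sum_arcs (fun i j => r i k) Hzu HzA Hx).
rewrite (sum_arcs (fun i j => e i j k (x i j)) Hzu HzA Hx).
set F := fun i => Eext s E1 E i k.
have key : {in zip (s::p) p, forall u, r u.1 k = (F u.2 - F u.1) + e u.1 u.2 k (x u.1 u.2)}.
  move=> [i j] Hz /=.
  have [_ Hj] := zip_mem2 Hz.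
  have Hjs : j != s.
    by apply/negP => /eqP E'; move: Hu; rewrite /= -E' Hj.
  have Hun : forall i', (i',j) \in zip (s::p) p -> i' = i.
    by move=> i' Hz'; apply: (zip_pred_uniq Hu Hz' Hz).
  have := HE j k Hjs.
  rewrite (sum_in (fun i' => Eext s E1 E i' k + r i' k - e i' j k (x i' j)) (HzA _ Hz) Hz Hun Hx).
  rewrite /F /Eext (negbTE Hjs) => ->; ring.
rewrite (eq_big_seq _ key) big_split /= zip_tele Hl /F /Eext eqxx; ring.
Qed.

Lemma Jkey (R : realFieldType) (n N : nat) (A : rel 'I_n) (s t : 'I_n)
  (tau e : 'I_n -> 'I_n -> 'I_N -> {ffun 'I_N -> bool} -> R) (g : R) (E1 : 'I_N -> R)
  (x : routing n N) r E :
  feasible A s t e E1 x r E ->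
  Jobj A tau g x r = JRobj A tau e g x - g * \sum_k E1 k + g * \sum_k Eext s E1 E t k.
Proof.
move=> Hf.
rewrite /Jobj /JRobj.
rewrite (gen_split A (fun i j k => tau i j k (x i j)) (fun i j k => r i k) (fun i j k => x i j k)).
rewrite (gen_split A (fun i j k => tau i j k (x i j)) (fun i j k => e i j k (x i j)) (fun i j k => x i j k)).
rewrite (eq_bigr _ (fun k _ => per_k k Hf)) !big_split /= sumrN; ring.
Qed.

Lemma construct (R : realFieldType) (n N : nat) (A : rel 'I_n) (s t : 'I_n)
  (e : 'I_n -> 'I_n -> 'I_N -> {ffun 'I_N -> bool} -> R) (E1 : 'I_N -> R)
  (x : routing n N) :
  t != s -> (forall k, 0 <= E1 k) ->
  (forall i j k y, A i j -> 0 < e i j k y) ->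
  valid_routing A s t x ->
  (forall k : 'I_N,
     E1 k < \sum_(i : 'I_n) \sum_(j : 'I_n | A i j && x i j k) e i j k (x i j)) ->
  exists r E, feasible A s t e E1 x r E /\ forall k, Eext s E1 E t k = 0.
Proof.
move=> Hts HE1 he Hv Hrech.
have [pk Hpk] := fin_all_exists Hv.
pose w k := fun i j => e i j k (x i j).
pose r i k := if i == s then remE (w k) s (pk k) - E1 k else 0.
pose E j k := Eat (w k) s (pk k) j.
have Hw : forall k i j, A i j -> 0 <= w k i j by move=> k i j Hij; apply: ltW; apply: he.
exists r, E; split; last first.
  move=> k; rewrite /Eext (negbTE Hts) /E.
  have [Hp Hl Hu _] := Hpk k; by rewrite -Hl Eat_last.
split=> //.
- move=> i k; rewrite /r; case: (i == s) => //.
  have [Hp Hl Hu Hx] := Hpk k.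
  rewrite subr_ge0 remE_sum; apply: ltW.
  have := Hrech k.
  rewrite -(sum_arcs (fun i j => w k i j) (zip_uniq Hu) (fun u => zip_mem_A Hp) Hx).
  congr (_ < _); apply: eq_bigr => i' _; rewrite big_mkcondr /=.
  by apply: eq_bigr => j _; case: (x i' j k); rewrite ?mulr1 ?mulr0.
- move=> j k Hjs.
  have [Hp Hl Hu Hx] := Hpk k.
  case Hj: (j \in pk k).
    have [i Hz] := zip_pred_ex s Hj.
    have Hun : forall i', (i',j) \in zip (s::pk k) (pk k) -> i' = i.
      by move=> i' Hz'; apply: (zip_pred_uniq Hu Hz' Hz).
    rewrite (sum_in (fun i' => Eext s E1 E i' k + r i' k - e i' j k (x i' j)) (zip_mem_A Hp Hz) Hz Hun Hx).
    have -> : Eext s E1 E i k + r i k = Eat (w k) s (pk k) i.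
      rewrite /Eext /r /E; case: eqP => [->|_]; last by rewrite addr0.
      by rewrite Eat_a; ring.
    rewrite /E (Eat_step (w k) Hu Hz) /w; ring.
  rewrite /E Eat_out; last by rewrite in_cons negb_or Hjs Hj.
  rewrite big1 // => i Hij; rewrite Hx //.
  case Hz: ((i,j) \in zip (s::pk k) (pk k)); last by rewrite mulr0.
  by have [_ /= H] := zip_mem2 Hz; rewrite H in Hj.
- move=> i k; rewrite /Eext; case: (i == s) => //.
  have [Hp Hl Hu Hx] := Hpk k.
  exact: (Eat_ge0 _ Hp (Hw k)).
Qed.

Lemma seq_min (R : realFieldType) (T : eqType) (P : T -> Prop) (f : T -> R) (l : seq T) :
  (exists2 x, x \in l & P x) -> exists x, P x /\ forall y, y \in l -> P y -> f x <= f y.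
Proof.
elim: l => [[x] //|a l IH] Hex.
have [[x2 Hx2l Hx2]|Hno] := classic (exists2 x, x \in l & P x).
  have [m [Pm Hm]] := IH (ex_intro2 _ _ x2 Hx2l Hx2).
  have [Pa|nPa] := classic (P a).
    have [le_am|le_ma] := boolP (f a <= f m).
      exists a; split=> // y; rewrite in_cons => /orP[/eqP -> //|Hy] Py.
      exact: le_trans le_am (Hm _ Hy Py).
    exists m; split=> // y; rewrite in_cons => /orP[/eqP -> _|Hy Py]; last exact: Hm.
    by move: le_ma; rewrite -ltNge => /ltW.
  exists m; split=> // y; rewrite in_cons => /orP[/eqP -> //|Hy Py]; last exact: Hm.
have Pa : P a.
  case: Hex => x; rewrite in_cons => /orP[/eqP -> //|Hx Px].
  by case: Hno; exists x.
exists a; split=> // y; rewrite in_cons => /orP[/eqP -> //|Hy Py].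
by case: Hno; exists y.
Qed.

Lemma fin_min (R : realFieldType) (T : finType) (P : T -> Prop) (f : T -> R) :
  (exists x, P x) -> exists x, P x /\ forall y, P y -> f x <= f y.
Proof.
move=> [x Px].
have [m [Pm Hm]] := seq_min f (ex_intro2 (fun y => y \in enum T) P x (mem_enum T x) Px).
by exists m; split=> // y Py; apply: Hm => //; rewrite mem_enum.
Qed.

From mathcomp Require Import lra.

Theorem mainTheorem6 (R : realFieldType) (n N : nat) (hn : (2 <= n)%N) (hN : (1 <= N)%N)
    (s t : 'I_n) (hs : val s = 0%N) (ht : val t = n.-1)
    (A : rel 'I_n) (hIs : forall j, ~~ A j s) (hOt : forall j, ~~ A t j)
    (tau e : 'I_n -> 'I_n -> 'I_N -> {ffun 'I_N -> bool} -> R)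
    (E1 : 'I_N -> R) (g : R)
    (hE1 : forall k, 0 <= E1 k) (hg : 0 < g)
    (he : forall i j k y, A i j -> 0 < e i j k y)
    (hpath : exists p : seq 'I_n, path A s p /\ last s p = t)
    (hrech : forall x : routing n N, valid_routing A s t x ->
       forall k : 'I_N,
         E1 k < \sum_(i : 'I_n) \sum_(j : 'I_n | A i j && x i j k) e i j k (x i j)) :
  (exists x r E, optimal_MSR A s t tau e g E1 x r E) /\
  (forall x r E, optimal_MSR A s t tau e g E1 x r E ->
     optimal_R A s t tau e g x /\
     Jobj A tau g x r = JRobj A tau e g x - g * \sum_(k : 'I_N) E1 k).
Proof.
have Hts : t != s.
  apply/negP => /eqP /(congr1 val); rewrite hs ht => H.
  have h1 : (0 < n.-1)%N by rewrite -subn1 subn_gt0.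
  by rewrite H in h1.
have Hlow : forall x r E, feasible A s t e E1 x r E ->
    JRobj A tau e g x - g * \sum_k E1 k <= Jobj A tau g x r.
  move=> x r E Hf; rewrite (Jkey tau g Hf).
  have : 0 <= g * \sum_k Eext s E1 E t k.
    apply: mulr_ge0; first exact: ltW.
    by apply: sumr_ge0 => k _; case: Hf => _ _ _ ->.
  lra.
have Hcons : forall x, valid_routing A s t x -> exists r E, feasible A s t e E1 x r E /\
    Jobj A tau g x r = JRobj A tau e g x - g * \sum_k E1 k.
  move=> x Hv; have [r [E [Hf Ht]]] := construct Hts hE1 he Hv (hrech x Hv).
  exists r, E; split=> //; rewrite (Jkey tau g Hf).
  have -> : \sum_k Eext s E1 E t k = 0 by apply: big1 => k _; exact: Ht k.
  by rewrite mulr0 addr0.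
have Hmin : exists x, valid_routing A s t x /\
    forall x', valid_routing A s t x' -> JRobj A tau e g x <= JRobj A tau e g x'.
  pose dec (X : {ffun 'I_n * 'I_n -> {ffun 'I_N -> bool}}) : routing n N := fun i j => X (i,j).
  have decenc : forall x : routing n N, dec [ffun u => x u.1 u.2] = x.
    move=> x0; apply: functional_extensionality => i; apply: functional_extensionality => j.
    by rewrite /dec ffunE.
  have [xm [Hxm Hmm]] : exists X, valid_routing A s t (dec X) /\
      forall Y, valid_routing A s t (dec Y) -> JRobj A tau e g (dec X) <= JRobj A tau e g (dec Y).
    apply: (fin_min (fun X => JRobj A tau e g (dec X))).
    have [p [Hp Hl]] := hpath.
    move: Hl; case: (shortenP Hp) => p' Hp' Hu _ Hl.
    exists [ffun u => [ffun k : 'I_N => u \in zip (s::p') p']].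
    move=> k; exists p'; split=> // i j _; by rewrite /dec !ffunE.
  exists (dec xm); split=> // x' Hv'.
  by rewrite -(decenc x'); apply: Hmm; rewrite decenc.
split.
  have [xm [Hv Hm]] := Hmin.
  have [r [E [Hf HJ]]] := Hcons xm Hv.
  exists xm, r, E; split=> // x' r' E' Hf'.
  have := Hlow _ _ _ Hf'; have := Hm x' (let: And4 H _ _ _ := Hf' in H); lra.
move=> x r E [Hf Hopt].
have Hv : valid_routing A s t x by case: Hf.
split.
  split=> // x' Hv'.
  have [r' [E' [Hf' HJ']]] := Hcons x' Hv'.
  have := Hopt _ _ _ Hf'; have := Hlow _ _ _ Hf; lra.
have [r' [E' [Hf' HJ']]] := Hcons x Hv.
have := Hopt _ _ _ Hf'; have := Hlow _ _ _ Hf; lra.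
Qed.
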